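(* Let $\sigma=1^a21^b$ with $a\ge1$, $b\ge0$, and let $k=a+b+1$. Let $T$ be a set of patterns and $T'=\{1(\tau+1):\tau\in T\}$. For a set of patterns $R$ let $f_n(\sigma,R)$ be the number of partitions of $[n]$ avoiding $\sigma$ and every pattern in $R$. Then for every $n\ge1$, \[f_n(\sigma,T')=\sum_{i=1}^{k-2}f_{n-i}(\sigma,T)\binom{n-1}{i-1}+\sum_{i=k-1}^{n}f_{n-i}(\sigma,T)\binom{n-i+k-3}{k-3},\] where $f_m=0$ for $m<0$, and binomial coefficients $\binom{m}{-1}$ (arising only when $k=2$) are interpreted as $1$ if $m=-1$ and $0$ if $m\ge0$.
   Context: Set partitions are written in canonical sequential form (restricted growth words). Pattern containment means having a subsequence order-isomorphic to the pattern. For a word $\tau$, $\tau+1$ adds $1$ to every letter, so $1(\tau+1)$ is the pattern obtained by prefixing a new smallest block containing only the first element; $1^a$ denotes $a$ copies of $1$. *)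

(* Defs.v *)
From Stdlib Require Import ClassicalEpsilon.
From mathcomp Require Import all_boot.
Set Implicit Arguments. Unset Strict Implicit. Unset Printing Implicit Defensive.

(* Restricted growth words with letters 1,2,3,... (canonical sequential form):
   first letter 1, each letter at most 1 + max of the previous ones. *)
Fixpoint rgw_from (m : nat) (s : seq nat) : bool :=
  match s with
  | [::] => true
  | x :: s' => [&& 0 < x, x <= m.+1 & rgw_from (maxn m x) s']
  end.
Definition rgw (s : seq nat) : bool := rgw_from 0 s.

Definition order_iso (s p : seq nat) : bool :=
  (size s == size p) &&
  [forall i : 'I_(size s), forall j : 'I_(size s),
     ((nth 0 s i < nth 0 s j) == (nth 0 p i < nth 0 p j)) &&
     ((nth 0 s i == nth 0 s j) == (nth 0 p i == nth 0 p j))].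

Definition contains (w p : seq nat) : bool :=
  [exists m : (size w).-tuple bool, order_iso (mask m w) p].

Definition avoids_all (w : seq nat) (R : seq nat -> Prop) : Prop :=
  forall p, R p -> ~~ contains w p.

Definition decP (P : Prop) : bool :=
  if excluded_middle_informative P then true else false.

(* f_n(sigma, R): number of partitions of [n] (RGWs of length n; their
   letters are <= n, hence encoded as n-tuples over 'I_(n+1)) avoiding
   sigma and every pattern in R. *)
Definition fcount (n : nat) (sigma : seq nat) (R : seq nat -> Prop) : nat :=
  #|[set t : n.-tuple 'I_n.+1 |
      [&& rgw (map val t), ~~ contains (map val t) sigma
        & decP (avoids_all (map val t) R)]]|.

Definition sigma_ab (a b : nat) : seq nat := nseq a 1 ++ 2 :: nseq b 1.

Definition liftT (T : seq nat -> Prop) : seq nat -> Prop :=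
  fun p => exists tau, T tau /\ p = 1 :: map S tau.

Definition fshift (n i : nat) (sigma : seq nat) (R : seq nat -> Prop) : nat :=
  if i <= n then fcount (n - i) sigma R else 0.

(* Main.v *)
From Stdlib Require Import ClassicalEpsilon.
Require Import Defs.
From mathcomp Require Import all_boot zify.
Set Implicit Arguments. Unset Strict Implicit. Unset Printing Implicit Defensive.


Lemma order_isoP s p :
  reflect (size s = size p /\ forall i j, i < size s -> j < size s ->
     ((nth 0 s i < nth 0 s j) = (nth 0 p i < nth 0 p j)) /\
     ((nth 0 s i == nth 0 s j) = (nth 0 p i == nth 0 p j)))
   (order_iso s p).
Proof.
rewrite /order_iso; apply: (iffP andP).
  case=> /eqP -> /forallP H; split=> // i j hi hj.
  have /forallP/(_ (Ordinal hj)) := H (Ordinal hi).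
  by case/andP=> /eqP -> /eqP ->.
case=> -> H; split=> //; apply/forallP=> i; apply/forallP=> j.
by have [-> ->] := H i j (ltn_ord i) (ltn_ord j); rewrite !eqxx.
Qed.

Lemma containsP w p :
  reflect (exists s, subseq s w /\ order_iso s p) (contains w p).
Proof.
apply: (iffP existsP).
  by case=> m h; exists (mask m w); split=> //; apply: mask_subseq.
case=> s [/subseqP [m hm ->] h].
by exists (Tuple (introT eqP hm)).
Qed.

Lemma order_iso_mapS s p : order_iso (map S s) p = order_iso s p.
Proof.
apply/order_isoP/order_isoP; rewrite size_map => -[hs H]; split=> // i j hi hj.
  by have := H i j hi hj; rewrite !(nth_map 0) // ltnS eqSS.
by rewrite !(nth_map 0) // ltnS eqSS; apply: H.
Qed.

Lemma subseq_mapP (T1 T2 : eqType) (f : T1 -> T2) s w :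
  reflect (exists2 s0, subseq s0 w & s = map f s0) (subseq s (map f w)).
Proof.
apply: (iffP subseqP).
  case=> m; rewrite size_map => hm ->; exists (mask m w); rewrite ?map_mask //.
  exact: mask_subseq.
case=> s0 /subseqP [m hm ->] ->; exists m; rewrite ?size_map ?map_mask //.
Qed.

Lemma contains_mapS u p : contains (map S u) p = contains u p.
Proof.
apply/containsP/containsP => -[s [hs hi]].
  case/subseq_mapP: hs => s0 h0 e; subst s; exists s0; split=> //.
  by rewrite -order_iso_mapS.
by exists (map S s); split; [exact: map_subseq | rewrite order_iso_mapS].
Qed.

Lemma nth_pat a b x y i : i < a + b + 1 ->
  nth 0 (nseq a x ++ y :: nseq b x) i = if i == a then y else x.
Proof.
move=> hi; rewrite nth_cat size_nseq nth_nseq.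
case: ltngtP => h //.
  rewrite -[i - a]prednK ?subn_gt0 //= nth_nseq; case: ifP => // /negbT.
  by rewrite -leqNgt => h2; exfalso; move: h2 hi h; clear; lia.
by rewrite h subnn.
Qed.

Lemma size_pat a b (x y : nat) : size (nseq a x ++ y :: nseq b x) = a + b + 1.
Proof. by rewrite size_cat /= !size_nseq addnS addn1. Qed.

Lemma iso_sigma a b s : 0 < a ->
  order_iso s (sigma_ab a b) <->
  exists c d, c < d /\ s = nseq a c ++ d :: nseq b c.
Proof.
move=> ha; have h0a : (0 == a) = false by rewrite eq_sym gtn_eqF.
rewrite /sigma_ab; split.
  case/order_isoP; rewrite size_pat => hs H.
  have h0 : 0 < a + b + 1 by rewrite addn1.
  have hA : a < a + b + 1 by rewrite addn1 ltnS leq_addr.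
  exists (nth 0 s 0), (nth 0 s a); split.
    have [-> _] := H 0 a ltac:(by rewrite hs) ltac:(by rewrite hs).
    by rewrite !nth_pat // eqxx h0a.
  apply: (@eq_from_nth _ 0); first by rewrite size_pat.
  move=> i hi; rewrite hs in hi; rewrite nth_pat //.
  case: eqP => [-> // | /eqP hia].
  have [_ E] := H i 0 ltac:(by rewrite hs) ltac:(by rewrite hs).
  by move: E; rewrite !nth_pat // (negbTE hia) h0a eqxx => /eqP.
case=> c [d [hcd ->]]; apply/order_isoP; rewrite !size_pat; split=> // i j hi hj.
rewrite !nth_pat //.
case: (i == a); case: (j == a); rewrite ?ltnn ?eqxx //.
  by rewrite ltnNge ltnW // gtn_eqF.
by rewrite hcd ltn_eqF.
Qed.

Section Sub.
Variable T : eqType.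
Implicit Types (w u v : seq T) (x y : T).

Lemma subseq_nseq_count a x w : subseq (nseq a x) w = (a <= count_mem x w).
Proof.
elim: w a => [|z w IH] [|a] //=.
case: eqP => [<- | ne]; first by rewrite IH eqxx add1n ltnS.
by rewrite (IH a.+1) (negbTE (introN eqP (nesym ne))) add0n.
Qed.

Lemma subseq_cat_split u v w : subseq (u ++ v) w ->
  exists w1 w2, [/\ w = w1 ++ w2, subseq u w1 & subseq v w2].
Proof.
elim: w u => [|z w IH] u.
  by case: u => //=; case: v => // _; exists [::], [::].
case: u => [|y u] /=.
  by move=> h; exists [::], (z :: w); rewrite sub0seq.
case: eqP => [-> | ne] h.
  have [w1 [w2 [-> h1 h2]]] := IH u h.
  by exists (z :: w1), w2; rewrite /= eqxx.
have [w1 [w2 [-> h1 h2]]] := IH (y :: u) h.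
exists (z :: w1), w2; split=> //.
exact: subseq_trans h1 (subseq_cons _ _).
Qed.

Lemma subseq_cons_split y v w : subseq (y :: v) w ->
  exists w1 w2, w = w1 ++ y :: w2 /\ subseq v w2.
Proof.
elim: w => [|z w IH] //=; case: eqP => [-> h | ne h].
  by exists [::], w.
have [w1 [w2 [-> h2]]] := IH h.
by exists (z :: w1), w2.
Qed.

Lemma pat_subseqP a b x y w :
  subseq (nseq a x ++ y :: nseq b x) w <->
  exists w1 w2, [/\ w = w1 ++ y :: w2, a <= count_mem x w1 & b <= count_mem x w2].
Proof.
split.
  case/subseq_cat_split => w1 [w3 [-> h1 /subseq_cons_split [w4 [w2 [-> h2]]]]].
  exists (w1 ++ w4), w2; rewrite -catA; split=> //.
    by rewrite count_cat; apply: leq_trans (leq_addr _ _); rewrite -subseq_nseq_count.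
  by rewrite -subseq_nseq_count.
case=> w1 [w2 [-> h1 h2]]; apply: cat_subseq; first by rewrite subseq_nseq_count.
by rewrite /= eqxx subseq_nseq_count.
Qed.
End Sub.

Lemma contains_sigmaP a b w : 0 < a ->
  contains w (sigma_ab a b) <->
  exists c d, c < d /\ subseq (nseq a c ++ d :: nseq b c) w.
Proof.
move=> ha; split.
  case/containsP => s [hs /(iso_sigma _ _ ha) [c [d [hcd e]]]].
  by exists c, d; rewrite -e.
case=> c [d [hcd hs]]; apply/containsP; exists (nseq a c ++ d :: nseq b c).
by split=> //; apply/(iso_sigma _ _ ha); exists c, d.
Qed.

Fixpoint merge (m : bitseq) (r : seq nat) : seq nat :=
  match m with
  | [::] => [::]
  | true :: m' => 1 :: merge m' r
  | false :: m' => match r with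
                   | [::] => 0 :: merge m' [::]
                   | x :: r' => x.+1 :: merge m' r'
                   end
  end.

Definition pos (s : seq nat) := all (fun x => 0 < x) s.
Definition ones (w : seq nat) : bitseq := map (fun x => x == 1) w.
Definition rest (w : seq nat) : seq nat := map predn (filter (fun x => 1 < x) w).

Lemma rgw_pos j s : rgw_from j s -> pos s.
Proof. by elim: s j => //= x s IH j /and3P [-> _ /IH]. Qed.

Lemma rgw_bound j s : rgw_from j s -> all (fun x => x <= j + size s) s.
Proof.
elim: s j => //= x s IH j /and3P [_ h1 /IH h2]; apply/andP; split.
  by apply: leq_trans h1 _; rewrite addnS ltnS leq_addr.
apply/allP=> y /(allP h2); move/leq_trans; apply.
by rewrite addnS; move: h1; clear; rewrite /maxn; case: ifP; lia.
Qed.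

Lemma size_merge m r : size (merge m r) = size m.
Proof.
by elim: m r => [|[] m IH] [|x r] //=; rewrite IH.
Qed.

Lemma merge_ones m r : size r = count negb m -> pos r -> ones (merge m r) = m.
Proof.
elim: m r => [|[] m IH] r //=.
  by move=> h hp; rewrite IH.
case: r => [|x r] //= [h] /andP [hx hp].
by rewrite IH // -[x]prednK.
Qed.

Lemma merge_filter m r : size r = count negb m -> pos r ->
  filter (fun x => 1 < x) (merge m r) = map S r.
Proof.
elim: m r => [|[] m IH] r /=.
- by case: r.
- by move=> h hp; rewrite IH.
case: r => [|x r] //= [h] /andP [hx hp].
by rewrite ltnS hx IH.
Qed.

Lemma rgw_merge j m r : size r = count negb m -> pos r ->
  rgw_from j.+1 (merge m r) = rgw_from j r.
Proof.
elim: m j r => [|[] m IH] j r //=.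
- by case: r.
- by move=> h hp; rewrite (maxn_idPl (ltn0Sn j)) IH.
case: r => [|x r] //= [h] /andP [hx hp].
by rewrite maxnSS hx IH.
Qed.

Lemma rest_cons x w : rest (x :: w) = if 1 < x then x.-1 :: rest w else rest w.
Proof. by rewrite /rest /=; case: ifP. Qed.

Lemma merge_decomp w : pos w -> merge (ones w) (rest w) = w.
Proof.
elim: w => //= x w IH /andP [hx hp].
rewrite rest_cons; case: eqP => [-> | ne] /=; first by rewrite IH.
have -> : 1 < x by case: x hx ne => [|[|]].
by rewrite /= prednK // IH.
Qed.

Lemma size_rest w : pos w -> size (rest w) = count negb (ones w).
Proof.
elim: w => //= x w IH /andP [hx hp].
rewrite rest_cons; case: eqP => [-> | ne] /=; first by rewrite IH.
have -> : 1 < x by case: x hx ne => [|[|]].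
by rewrite /= IH.
Qed.

Lemma pos_rest w : pos (rest w).
Proof.
by rewrite /pos /rest all_map; apply/allP => x; rewrite mem_filter /= => /andP [h _]; case: x h => [|[]].
Qed.

Lemma size_ones w : size (ones w) = size w.
Proof. by rewrite size_map. Qed.

Lemma rgw_head x w : rgw (x :: w) -> x = 1.
Proof. by rewrite /rgw /= => /and3P [h1 h2 _]; apply/eqP; rewrite eqn_leq h1 h2. Qed.

Lemma iso_lift s tau : all (fun x => 1 < x) s -> pos tau ->
  order_iso (1 :: s) (1 :: map S tau) = order_iso s tau.
Proof.
move=> /all_nthP hs /all_nthP ht.
apply/order_isoP/order_isoP.
  move=> -[e H]; have {}e : size s = size tau by move: e => /= [->]; rewrite size_map.
  split=> // i j hi hj.
  by have := H i.+1 j.+1 hi hj; rewrite /= !(nth_map 0) -?e // ltnS eqSS.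
move=> -[e H]; split; first by rewrite /= e size_map.
move=> i j hi hj.
case: i hi => [|i] hi; case: j hj => [|j] hj //=; rewrite ?(nth_map 0) -?e //.
- have := hs 0 j hj; have := ht 0 j ltac:(by rewrite -e).
  by move=> h1 h2; rewrite h2 ltnS h1 ltn_eqF // eq_sym gtn_eqF.
- have := hs 0 i hi; have := ht 0 i ltac:(by rewrite -e).
  by move=> h1 h2; rewrite ltnNge ltnW // ltnNge ltnW //= gtn_eqF // gtn_eqF.
by rewrite ltnS eqSS; apply: H.
Qed.

Lemma contains_lift w tau : pos (1 :: w) -> pos tau ->
  contains (1 :: w) (1 :: map S tau) = contains (filter (fun x => 1 < x) w) tau.
Proof.
rewrite {1}/pos /= => hw ht; apply/containsP/containsP.
  case=> -[|x s] [hs hi]; first by move/order_isoP: hi => [].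
  have hs' : subseq s w.
    move: hs => /=; case: eqP => // _ h.
    exact: subseq_trans (subseq_cons _ _) h.
  have hx : 0 < x.
    have : x \in 1 :: w by apply: (mem_subseq hs); rewrite mem_head.
    by rewrite inE => /predU1P [-> // | /(allP hw)].
  have ha : all (fun y => 1 < y) s.
    apply/(all_nthP 0) => j hj; case/order_isoP: hi => /= [[e] H]; rewrite size_map in e.
    have [E _] := H 0 j.+1 erefl hj; move: E; rewrite /= (nth_map 0) -?e //.
    have := (all_nthP 0 ht) j ltac:(by rewrite -e).
    by move=> h; rewrite ltnS h => /(leq_ltn_trans hx).
  exists s; split; first by rewrite subseq_filter ha.
  rewrite -(@iso_lift s tau ha ht).
  move/order_isoP: hi => [e H]; apply/order_isoP; split.
    by move: e => /= [->].
  have e' : size s = size tau by move: e => /= [->]; rewrite size_map.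
  have hT : forall j, j < size s -> 1 < nth 0 [seq i.+1 | i <- tau] j.
    move=> j hj; rewrite (nth_map 0) -?e' // ltnS.
    by apply: (all_nthP 0 ht); rewrite -e'.
  move=> i j hi hj.
  case: i hi => [|i] hi; case: j hj => [|j] hj /=.
  + by rewrite !ltnn !eqxx.
  + have h1 := (all_nthP 0 ha) j hj; have h3 := hT j hj.
    by rewrite h1 h3 (ltn_eqF h1) (ltn_eqF h3).
  + have h1 := (all_nthP 0 ha) i hi; have h3 := hT i hi.
    by rewrite ltnNge (ltnW h1) ltnNge (ltnW h3) (gtn_eqF h1) (gtn_eqF h3).
  + exact: H i.+1 j.+1 hi hj.
case=> s [hs hi]; exists (1 :: s); split.
  by rewrite /= ?eqxx; move: hs; rewrite subseq_filter => /andP [].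
by rewrite iso_lift //; move: hs; rewrite subseq_filter => /andP [].
Qed.

Fixpoint okm (a b i p : nat) (m : bitseq) : bool :=
  match m with
  | [::] => true
  | true :: m' => okm a b i p.+1 m'
  | false :: m' => ((p < a) || (i - p < b)) && okm a b i p m'
  end.

Lemma okmP a b i p m : okm a b i p m = false <->
  exists m1 m2, [/\ m = m1 ++ false :: m2, a <= p + count id m1
                   & b <= i - (p + count id m1)].
Proof.
elim: m p => [|[] m IH] p /=.
- by split=> // -[[|? ?] [? []]].
- rewrite IH; split.
    by case=> m1 [m2 [-> h1 h2]]; exists (true :: m1), m2; split=> //=; lia.
  case=> m1 [m2 [e h1 h2]]; case: m1 e h1 h2 => [|[] m1] //= [->] h1 h2.
  by exists m1, m2; split=> //; lia.
- split.
    move/negbT/nandP => [| /negbTE /IH [m1 [m2 [-> h1 h2]]]].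
      by rewrite negb_or -!leqNgt => /andP [h1 h2]; exists [::], m; rewrite /= addn0.
    by exists (false :: m1), m2.
  case=> m1 [m2 [e h1 h2]]; case: m1 e h1 h2 => [|[] m1] //= [e] h1 h2.
    by rewrite addn0 in h1 h2; rewrite ltnNge h1 /= ltnNge h2.
  by apply/negbTE/nandP; right; apply/negbT; apply/IH; exists m1, m2.
Qed.

Lemma map_eq_cat_cons (T1 T2 : Type) (f : T1 -> T2) w m1 z m2 :
  map f w = m1 ++ z :: m2 ->
  exists w1 y w2, [/\ w = w1 ++ y :: w2, map f w1 = m1, f y = z & map f w2 = m2].
Proof.
elim: m1 w => [|u m1 IH] [|x w] //= [e1 e2].
  by exists [::], x, w.
have [w1 [y [w2 [-> h1 h2 h3]]]] := IH w e2.
by exists (x :: w1), y, w2; rewrite /= e1 h1.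
Qed.

Lemma count_ones w : count id (ones w) = count_mem 1 w.
Proof. by rewrite count_map. Qed.

Lemma contains_sigma_split a b w : 0 < a -> pos w ->
  contains w (sigma_ab a b) <->
  contains (filter (fun x => 1 < x) w) (sigma_ab a b) \/
  okm a b (count id (ones w)) 0 (ones w) = false.
Proof.
move=> ha hw; split.
  case/(contains_sigmaP _ _ ha) => c [d [hcd hs]].
  have hc : c \in w.
    by apply: (mem_subseq hs); rewrite mem_cat mem_nseq ha eqxx.
  have c0 : 0 < c by apply: (allP hw).
  case: (ltngtP c 1) => [|c1|c1].
  - by rewrite ltnS leqn0 => /eqP c00; rewrite c00 in c0.
  - left; apply/(contains_sigmaP _ _ ha); exists c, d; split=> //.
    rewrite subseq_filter hs andbT all_cat all_nseq c1 orbT /= all_nseq c1 orbT andbT.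
    exact: ltn_trans hcd.
  right; rewrite c1 in hcd hs; case/pat_subseqP: hs => w1 [w2 [-> h1 h2]].
  apply/okmP; exists (ones w1), (ones w2); split.
  - by rewrite /ones map_cat /= gtn_eqF.
  - by rewrite add0n count_ones.
  rewrite add0n /ones map_cat count_cat /= gtn_eqF //= add0n.
  by rewrite addKn count_map.
case.
  case/(contains_sigmaP _ _ ha) => c [d [hcd hs]].
  apply/(contains_sigmaP _ _ ha); exists c, d; split=> //.
  exact: subseq_trans hs (filter_subseq _ _).
case/okmP => m1 [m2 [e h1 h2]].
have [w1 [y [w2 [ew e1 ey e2]]]] := map_eq_cat_cons e.
apply/(contains_sigmaP _ _ ha); exists 1, y; split.
  have : y \in w by rewrite ew mem_cat mem_head orbT.
  move/(allP hw); move: ey; clear; case: y => [|[|y]] //.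
apply/pat_subseqP; exists w1, w2; split=> //.
  by rewrite -count_ones /ones e1; move: h1; rewrite add0n.
move: h2; rewrite add0n e count_cat /= addKn -e2 count_ones.
by [].
Qed.

Fixpoint bits (L : nat) : seq bitseq :=
  if L is L'.+1 then map (cons true) (bits L') ++ map (cons false) (bits L')
  else [:: [::]].

Lemma mem_bits L m : (m \in bits L) = (size m == L).
Proof.
elim: L m => [|L IH] m; first by case: m.
rewrite /= mem_cat; case: m => [|x m] /=.
  by apply/negbTE; rewrite negb_or; apply/andP; split; apply/negP => /mapP [y _].
have i1 : injective (cons true) by move=> u v [].
have i2 : injective (cons false) by move=> u v [].
case: x.
  rewrite (mem_map i1) IH eqSS; case: (size m == L) => //=.
  by apply/negbTE/negP => /mapP [y _].
rewrite (mem_map i2) IH eqSS orbC; case: (size m == L) => //=.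
by apply/negbTE/negP => /mapP [y _].
Qed.

Lemma uniq_bits L : uniq (bits L).
Proof.
elim: L => //= L IH; rewrite cat_uniq !map_inj_uniq // ?IH; try by move=> x y [].
rewrite andbT; apply/hasP => -[m /mapP [x _ ->] /mapP [y _]] //.
Qed.

Definition W (N r : nat) : nat := if r is r'.+1 then 'C(N + r', r') else (N == 0 : nat).
Definition okb (a b i p : nat) : bool := (p < a) || (i - p < b).
Definition rr a b i p q := count (okb a b i) (iota p q.+1).
Definition H a b i L q p :=
  count (fun m => (count id m == q) && okm a b i p m) (bits L).

Lemma H_rec a b i L q p : H a b i L.+1 q p =
  (if q is q'.+1 then H a b i L q' p.+1 else 0) + (if okb a b i p then H a b i L q p else 0).
Proof.
rewrite /H /= count_cat !count_map; congr (_ + _).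
  case: q => [|q]; last by apply: eq_count => m /=; rewrite ?add1n eqSS.
  by apply/eqP; rewrite -leqn0 leqNgt -has_count; apply/hasP => -[m _] /=.
rewrite /okb; case: ifP => h.
  by apply: eq_count => m /=; rewrite h.
by apply/eqP; rewrite -leqn0 leqNgt -has_count; apply/hasP => -[m _] /=; rewrite /okb in h; rewrite h andbF.
Qed.

Lemma H_closed a b i L q p :
  H a b i L q p = if q <= L then W (L - q) (rr a b i p q) else 0.
Proof.
elim: L q p => [|L IH] q p.
  rewrite /H /=; case: q => [|q] //=.
  by rewrite /rr /=; case: (okb a b i p).
rewrite H_rec; case: q => [|q].
  rewrite !IH /rr /= !subn0; case: (okb a b i p) => //=.
  by rewrite !bin0.
rewrite (IH q p.+1) (IH q.+1 p) ltnS.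
have E : rr a b i p q.+1 = okb a b i p + rr a b i p.+1 q by [].
rewrite E; case: (okb a b i p) => /=; last by rewrite addn0 subSS add0n.
case: (leqP q L) => hq; last by rewrite ltnNge (ltnW hq).
rewrite subSS ?add1n.
rewrite !add0n.
set r := rr a b i p.+1 q.
case: (ltnP q L) => hq2.
  have [M hM] : exists M, L - q = M.+1 by exists (L - q).-1; rewrite prednK // subn_gt0.
  have -> : L - q.+1 = M by lia.
  rewrite hM; case: r => [|s] /=; first by rewrite !bin0.
  have -> : M.+1 + s.+1 = (M + s.+1).+1 by lia.
  have -> : M.+1 + s = M + s.+1 by lia.
  by rewrite binS addnC.
have -> : L = q by apply/eqP; rewrite eqn_leq hq hq2.
by rewrite subnn ?ltnn addn0 add0n binn; case: r => [|s] //=; rewrite add0n binn.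
Qed.

Definition headT (m : bitseq) : bool := if m is true :: _ then true else false.
Definition goodm a b (m : bitseq) : bool := headT m && okm a b (count id m) 0 m.
Definition Gc a b n i := count (fun m => (count id m == i) && goodm a b m) (bits n).

Lemma Gc_H a b L i : Gc a b L.+1 i.+1 = H a b i.+1 L i 1.
Proof.
rewrite /Gc /H /= count_cat !count_map.
have -> : count (preim (cons false) (fun m => (count id m == i.+1) && goodm a b m)) (bits L) = 0.
  by apply/eqP; rewrite -leqn0 leqNgt -has_count; apply/hasP => -[m _] /=; rewrite /goodm /= andbF.
rewrite addn0; apply: eq_count => m /=; rewrite /goodm /=.
case: eqP => [e | ne].
  by rewrite e; move: e; rewrite add1n => -[->]; rewrite eqxx.
by case: eqP => // e; exfalso; apply: ne; rewrite add1n e.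
Qed.

Lemma Gc_0 a b n : Gc a b n 0 = 0.
Proof.
apply/eqP; rewrite -leqn0 leqNgt -has_count; apply/hasP => -[m _] /=.
by rewrite /goodm; case: m => [|[] m] //=; rewrite andbF.
Qed.

Lemma count_all_ok (P : pred nat) s : {in s, forall x, P x} -> count P s = size s.
Proof. by move=> h; rewrite -[RHS]count_predT; apply: eq_in_count. Qed.

Lemma count_none_ok (P : pred nat) s : {in s, forall x, ~~ P x} -> count P s = 0.
Proof. by move=> h; rewrite -[RHS](count_pred0 s); apply: eq_in_count => x /h /negbTE. Qed.

Lemma Gc_small a b n i : 1 <= i -> i < a + b -> i <= n ->
  Gc a b n i = 'C(n - 1, i - 1).
Proof.
case: n => [|L]; first by lia.
case: i => [|i] // _ hi hn; rewrite Gc_H H_closed; have -> : i <= L by lia.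
have -> : rr a b i.+1 1 i = i.+1.
  rewrite /rr count_all_ok ?size_iota // => t /[!mem_iota] ht; rewrite /okb; lia.
by rewrite /W subSS subn1 /= subn0; congr (binomial _ _); lia.
Qed.

Lemma Gc_big a b n i : 1 <= a -> a + b <= i -> i <= n ->
  Gc a b n i = (if a + b + 1 == 2 then (i == n : nat)
                else 'C(n - i + (a + b + 1) - 3, (a + b + 1) - 3)).
Proof.
case: n => [|L]; first by lia.
case: i => [|i] //; first by lia.
move=> ha hi hn; rewrite Gc_H H_closed; have -> : i <= L by lia.
have -> : rr a b i.+1 1 i = a - 1 + b.
  rewrite /rr.
  have -> : i.+1 = (a - 1) + ((i.+1 - b) - (a - 1)) + b by lia.
  rewrite !iotaD !count_cat.
  rewrite count_all_ok ?size_iota; last by move=> t /[!mem_iota] ht; rewrite /okb; lia.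
  rewrite (@count_none_ok _ (iota _ _)); last by move=> t /[!mem_iota] ht; rewrite /okb; lia.
  rewrite count_all_ok ?size_iota; last by move=> t /[!mem_iota] ht; rewrite /okb; lia.
  by rewrite addn0.
have -> : L - i = L.+1 - i.+1 by [].
case: ifP => h2.
  have -> : a - 1 + b = 0 by lia.
  by rewrite /W; case: eqP; case: eqP => //; lia.
have -> : a - 1 + b = (a + b + 1 - 3).+1 by lia.
by rewrite /W; congr 'C(_, _); lia.
Qed.

Lemma card_count (T : finType) (P : pred T) : #|[set x | P x]| = count P (enum T).
Proof. rewrite cardsE cardE /enum_mem size_filter count_filter; apply: eq_count => x.
by rewrite /= !inE andbT. Qed.

Definition allw n : seq (seq nat) :=
  map (fun t : n.-tuple 'I_n.+1 => map val t) (enum {: n.-tuple 'I_n.+1}).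

Lemma uniq_allw n : uniq (allw n).
Proof.
rewrite map_inj_uniq ?enum_uniq // => t1 t2 e.
by apply: val_inj; apply: (inj_map val_inj).
Qed.

Lemma mem_allw n w : (w \in allw n) = (size w == n) && all (fun x => x <= n) w.
Proof.
apply/mapP/andP.
  case=> t _ ->; rewrite size_map size_tuple; split=> //.
  by apply/allP => x /mapP [y _ ->]; rewrite -ltnS ltn_ord.
case=> /eqP hs /allP ha.
have hs' : size (map (@inord n) w) == n by rewrite size_map hs.
exists (Tuple hs'); first by rewrite mem_enum.
rewrite /= -map_comp -[LHS]map_id; apply/eq_in_map => x hx /=.
by rewrite inordK // ltnS ha.
Qed.

Lemma fcount_list n s R : fcount n s R =
  count (fun w => [&& rgw w, ~~ contains w s & Defs.decP (avoids_all w R)]) (allw n).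
Proof. by rewrite /fcount card_count /allw count_map. Qed.

Lemma decPP P : reflect P (Defs.decP P).
Proof. by rewrite /Defs.decP; case: ClassicalEpsilon.excluded_middle_informative => h; constructor. Qed.

Lemma pos_merge m r : size r = count negb m -> pos (merge m r).
Proof.
elim: m r => [|[] m IH] r //=.
  by move=> h; rewrite /pos /=; apply: IH.
by case: r => [|x r] //= [h]; rewrite /pos /=; apply: IH.
Qed.

Section Main.
Variables (a b : nat) (T : seq nat -> Prop).
Hypothesis ha : 0 < a.
Hypothesis hT : forall tau, T tau -> rgw tau.

Lemma E1 m r : size r = count negb m -> pos r -> rgw (merge (true :: m) r) = rgw r.
Proof. by move=> hs hp; rewrite /rgw /= rgw_merge. Qed.

Lemma E2 m r : size r = count negb m -> pos r ->
  contains (merge (true :: m) r) (sigma_ab a b) <->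
  contains r (sigma_ab a b) \/ okm a b (count id (true :: m)) 0 (true :: m) = false.
Proof.
move=> hs hp.
have hs' : size r = count negb (true :: m) by [].
rewrite (@contains_sigma_split a b _ ha (pos_merge hs')) merge_ones // merge_filter //.
by rewrite contains_mapS.
Qed.

Lemma E3 m r : size r = count negb m -> pos r ->
  avoids_all (merge (true :: m) r) (liftT T) <-> avoids_all r T.
Proof.
move=> hs hp.
have hs' : size r = count negb (true :: m) by [].
have E : forall tau, T tau ->
    contains (merge (true :: m) r) (1 :: map S tau) = contains r tau.
  move=> tau Tt; rewrite /= contains_lift.
  - by rewrite merge_filter // contains_mapS.
  - exact: (pos_merge hs').
  exact: rgw_pos (hT Tt).
split.
  by move=> av tau Tt; rewrite -(E tau Tt); apply: av; exists tau.
by move=> av p [tau [Tt ->]]; rewrite E //; apply: av.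
Qed.

Definition XT w := [&& rgw w, ~~ contains w (sigma_ab a b) & Defs.decP (avoids_all w (liftT T))].
Definition XS w := [&& rgw w, ~~ contains w (sigma_ab a b) & Defs.decP (avoids_all w T)].
Definition Dl n := [seq merge m r | m <- filter (goodm a b) (bits n),
                                     r <- filter XS (allw (count negb m))].

Lemma memD n : 0 < n -> filter XT (allw n) =i Dl n.
Proof.
move=> hn w; rewrite mem_filter mem_allw; apply/idP/allpairsPdep.
  case/and3P => /and3P [hr hc /decPP hav] /eqP hsz hb.
  case: w hsz hr hc hav hb => [|x w'] hsz hr hc hav hb; first by rewrite -hsz in hn.
  have x1 := rgw_head hr; subst x.
  have hp' : pos w' by have := rgw_pos hr; rewrite /pos /= .
  have ew : merge (true :: ones w') (rest w') = 1 :: w' by rewrite /= merge_decomp.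
  have hs := size_rest hp'.
  have hpr := pos_rest w'.
  exists (true :: ones w'), (rest w'); split=> //.
    rewrite mem_filter mem_bits /goodm /= size_ones -hsz eqxx andbT.
    apply/negP => /negP; rewrite -/(okm _ _ _ _ (true :: _)) => /negbTE hok.
    by move/negP: hc; apply; rewrite -ew; apply/(E2 hs hpr); right.
  rewrite mem_filter mem_allw.
  have hrr : rgw (rest w') by rewrite -(E1 hs hpr) ew.
  apply/andP; split.
    apply/and3P; split=> //.
      by apply/negP => hc2; move/negP: hc; apply; rewrite -ew; apply/(E2 hs hpr); left.
    by apply/decPP; apply/(E3 hs hpr); rewrite ew.
  by rewrite /= hs eqxx /= add0n -hs; have := rgw_bound hrr.
case=> m [r [hm hr ->]].
move: hm hr; rewrite !mem_filter mem_bits mem_allw /goodm.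
case: m => [|[] m] //=.
move=> /andP [hok /eqP hsz] /and3P [/and3P [hrg hc /decPP hav] /eqP hs hb].
rewrite add0n in hs hb.
have hp := rgw_pos hrg.
have hrw : rgw (merge (true :: m) r) by rewrite E1.
have hok' : okm a b (count id (true :: m)) 0 (true :: m) by [].
apply/and4P; split=> //.
- apply/and3P; split=> //.
    apply/negP => /(E2 hs hp) [] //; first by apply/negP.
    by rewrite hok'.
  by apply/decPP; apply/(E3 hs hp).
- by rewrite size_merge hsz.
by have := rgw_bound hrw; rewrite /= size_merge hsz add0n.
Qed.
End Main.

Lemma regroup (n : nat) (s : seq bitseq) (P : pred bitseq) (F : nat -> nat) :
  (forall m, m \in s -> count id m <= n) ->
  \sum_(m <- s | P m) F (count id m) =
  \sum_(0 <= i < n.+1) F i * count (fun m => (count id m == i) && P m) s.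
Proof.
move=> hs.
rewrite big_mkcond /=.
rewrite (eq_big_seq (fun m => \sum_(0 <= i < n.+1) (if (count id m == i) && P m then F i else 0))); last first.
  move=> m hm; rewrite -big_mkcond /=.
  rewrite -big_filter.
  have -> : [seq i <- index_iota 0 n.+1 | (count id m == i) && P m] =
            if P m then [:: count id m] else [::].
    case: (P m).
      rewrite (eq_filter (a2 := pred1 (count id m))); last by move=> i; rewrite /= andbT eq_sym.
      by rewrite filter_pred1_uniq ?iota_uniq // mem_index_iota /= ltnS hs.
    by rewrite (eq_filter (a2 := pred0)) ?filter_pred0 // => i; rewrite andbF.
  by case: (P m); rewrite ?big_seq1 ?big_nil.
rewrite (exchange_big _ _ _ _ xpredT) /=.
apply: eq_bigr => i _.
rewrite -big_mkcond /= big_const_seq iter_addn_0 mulnC.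
by [].
Qed.

Lemma count_negb_n (m : bitseq) n : size m = n -> count negb m = n - count id m.
Proof.
move=> <-; rewrite -(count_predC id m) addKn; apply: eq_count => x //.
Qed.

Section Final.
Variables (a b : nat) (T : seq nat -> Prop).
Hypothesis ha : 0 < a.
Hypothesis hT : forall tau, T tau -> rgw tau.

Lemma uniqD n : uniq (Dl a b T n).
Proof.
apply: allpairs_uniq_dep.
- exact: filter_uniq (uniq_bits n).
- by move=> m _; apply: filter_uniq (uniq_allw _).
move=> p1 p2 /allpairsPdep [m1 [r1 [hm1 hr1 ->]]] /allpairsPdep [m2 [r2 [hm2 hr2 ->]]] /=.
move: hm1 hm2 hr1 hr2; rewrite !mem_filter mem_allw mem_allw.
move=> /andP [_ _] /andP [_ _] /andP [/and3P [hg1 _ _] /andP [/eqP hs1 _]].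
move=> /andP [/and3P [hg2 _ _] /andP [/eqP hs2 _]] e.
have hp1 := rgw_pos hg1; have hp2 := rgw_pos hg2.
have em : m1 = m2 by rewrite -(merge_ones hs1 hp1) e merge_ones.
subst m2.
have er : r1 = r2.
  apply: (inj_map succn_inj); rewrite -(merge_filter hs1 hp1) e merge_filter //.
by subst r2.
Qed.

Lemma fT_sum n : 0 < n ->
  fcount n (sigma_ab a b) (liftT T) =
  \sum_(0 <= i < n.+1) fcount (n - i) (sigma_ab a b) T * Gc a b n i.
Proof.
move=> hn.
rewrite fcount_list -size_filter.
have Pm := uniq_perm (filter_uniq _ (uniq_allw n)) (uniqD n) (@memD a b T ha hT n hn).
rewrite (perm_size Pm) /Dl size_flatten /shape sumnE -map_comp big_map.
rewrite (eq_big_seq (fun m => fcount (n - count id m) (sigma_ab a b) T)); last first.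
  move=> m hm /=; rewrite size_map size_filter -fcount_list.
  by congr fcount; apply: count_negb_n; move: hm; rewrite mem_filter mem_bits => /andP [_ /eqP].
rewrite big_filter (@regroup n _ _ (fun i => fcount (n - i) (sigma_ab a b) T)) //.
by move=> m; rewrite mem_bits => /eqP <-; apply: count_size.
Qed.

End Final.

Theorem lemma4p6 (a b : nat) (T : seq nat -> Prop) (n : nat) :
  1 <= a ->
  (forall tau, T tau -> rgw tau) ->
  1 <= n ->
  fcount n (sigma_ab a b) (liftT T) =
    \sum_(1 <= i < (a + b + 1) - 1)
        fshift n i (sigma_ab a b) T * 'C(n - 1, i - 1)
  + \sum_((a + b + 1) - 1 <= i < n.+1)
        fshift n i (sigma_ab a b) T *
        (if a + b + 1 == 2 then (i == n : nat)
         else 'C(n - i + (a + b + 1) - 3, (a + b + 1) - 3)).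
Proof.
move=> ha hT hn; rewrite (@fT_sum a b T ha hT n hn).
set G' := fun i => fshift n i (sigma_ab a b) T * Gc a b n i.
rewrite (eq_big_nat _ _ (F2 := G')); last first.
  by move=> i /andP [_ hi]; rewrite /G' /fshift -ltnS hi.
rewrite [X in X + _](eq_big_nat _ _ (F2 := G')); last first.
  move=> i /andP [h1 h2]; rewrite /G' /fshift; case: leqP => hi //.
  by rewrite Gc_small //; lia.
rewrite [X in _ + X](eq_big_nat _ _ (F2 := G')); last first.
  move=> i /andP [h1 h2]; rewrite /G' /fshift ltnS in h2 *; rewrite h2.
  by rewrite Gc_big //; lia.
rewrite big_ltn // {1}/G' Gc_0 muln0 add0n.
have k1 : 1 <= a + b + 1 - 1 by lia.
case: (leqP (a + b + 1 - 1) n.+1) => hk.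
  by rewrite -big_cat_nat.
rewrite (@big_geq _ _ _ (a + b + 1 - 1) n.+1) ?(ltnW hk) // addn0.
rewrite (@big_cat_nat _ _ _ n.+1 1 (a + b + 1 - 1)) //=; last exact: ltnW.
rewrite [X in _ = _ + X]big1_seq ?addn0 //.
move=> i /andP [_]; rewrite mem_index_iota => /andP [h1 _].
by rewrite /G' /fshift leqNgt h1.
Qed.
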